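(* Let $n/2 \leq r\leq n$ and let $(\mathcal{S},\mathcal{T})$ be an $r$-maximal cross-intersecting pair in $\binom{[n]}{\leq r}$. For any integer $\ell\ge 0$ with $\ell \le r$ and $n-\ell \leq r$, \[|\mathcal{S}(n-\ell)|+ |\mathcal{T}(n-\ell)| + |\mathcal{S}(\ell)|+ |\mathcal{T}(\ell)| = 2 \binom{n}{\ell}.\]
   Context: $\binom{[n]}{\le r}$ is the set of subsets of $[n]=\{1,\dots,n\}$ of size at most $r$. A pair $(\mathcal{S},\mathcal{T})$ of non-empty families of non-empty subsets is cross-intersecting if $S\cap T\ne\emptyset$ for all $S\in\mathcal{S},T\in\mathcal{T}$; it is $r$-maximal (in $\binom{[n]}{\le r}$) if whenever $(\mathcal{V},\mathcal{W})$ is a cross-intersecting pair in $\binom{[n]}{\le r}$ with $\mathcal{S}\subseteq\mathcal{V}$, $\mathcal{T}\subseteq\mathcal{W}$, then $(\mathcal{V},\mathcal{W})=(\mathcal{S},\mathcal{T})$. For a family $\mathcal{B}$, $\mathcal{B}(\ell)=\{B\in\mathcal{B}:|B|=\ell\}$. *)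

(* Defs.v *)
From mathcomp Require Import all_boot.
Set Implicit Arguments. Unset Strict Implicit. Unset Printing Implicit Defensive.

(* Ground set [n] = {1,...,n} is modelled by 'I_n = {0,...,n-1}. *)
Definition setfam (n : nat) := {set {set 'I_n}}.

Definition in_binom_le (n r : nat) (F : setfam n) : Prop :=
  F != set0 /\ forall A, A \in F -> 0 < #|A| /\ #|A| <= r.

Definition cross_intersecting_le (n r : nat) (S T : setfam n) : Prop :=
  [/\ in_binom_le r S, in_binom_le r T &
      forall A B, A \in S -> B \in T -> A :&: B != set0].

Definition r_maximal (n r : nat) (S T : setfam n) : Prop :=
  cross_intersecting_le r S T /\
  forall V W : setfam n, cross_intersecting_le r V W ->
    S \subset V -> T \subset W -> V = S /\ W = T.

Definition layer (n : nat) (F : setfam n) (l : nat) : setfam n :=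
  [set A in F | #|A| == l].

(* Main.v *)
Require Import Defs.
From mathcomp Require Import all_boot.

Set Implicit Arguments. Unset Strict Implicit.
Section Aux.
Variables (n r : nat).
Implicit Types (S T : setfam n) (A B C : {set 'I_n}).

Lemma ci_swap S T : cross_intersecting_le r S T -> cross_intersecting_le r T S.
Proof. case=> hS hT hX; split=> // A B hA hB; rewrite setIC; exact: hX. Qed.

Lemma swap_max S T : r_maximal r S T -> r_maximal r T S.
Proof.
case=> [ci hM]; split; first exact: (@ci_swap S T).
move=> V W hVW sTV sSW.
have [e1 e2] := hM W V (@ci_swap V W hVW) sSW sTV.
by split.
Qed.

Lemma upT S T B C : r_maximal r S T -> B \in T -> B \subset C -> #|C| <= r -> C \in T.
Proof.
move=> mx hB sBC hC; have mx' := mx; case: mx' => [[hS [hTn hT] hX] hM].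
have Bpos := (hT B hB).1.
have Cpos : 0 < #|C| by apply: leq_trans Bpos (subset_leq_card sBC).
have ci : cross_intersecting_le r S (C |: T).
  split=> //.
    split; first by apply/set0Pn; exists C; rewrite setU11.
    move=> A; rewrite in_setU1 => /orP [/eqP -> | /hT] //.
  move=> A X hA; rewrite in_setU1 => /orP [/eqP -> | /(hX A X hA)] //.
  have := hX A B hA hB; apply: contra => /eqP E.
  by rewrite -subset0 -E setIS.
have [_ <-] := hM S (C |: T) ci (subxx _) (subsetUr _ _).
by rewrite setU11.
Qed.

Lemma disj S T A : r_maximal r S T -> #|A| <= r -> A \notin S ->
  exists2 B, B \in T & A :&: B = set0.
Proof.
move=> mx hA nA; have mx' := mx; case: mx' => [[[hSn hS] [hTn hT] hX] hM].
have [/eqP A0 | Anz] := boolP (A == set0).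
  have [B hB] := set0Pn _ hTn; exists B => //; by rewrite A0 set0I.
have [/existsP [B /andP [hB /eqP e]] | H] := boolP [exists B, (B \in T) && (A :&: B == set0)].
  by exists B.
exfalso; move/negP: nA; apply.
have ci : cross_intersecting_le r (A |: S) T.
  split=> //.
    split; first by apply/set0Pn; exists A; rewrite setU11.
    move=> X; rewrite in_setU1 => /orP [/eqP -> | /hS] //.
    by rewrite card_gt0 Anz.
  move=> X B; rewrite in_setU1 => /orP [/eqP -> | hXS] hB; last exact: hX.
  apply/negP => e; move/negP: H; apply; apply/existsP; exists B; by rewrite hB e.
have [<- _] := hM (A |: S) T ci (subsetUr _ _) (subxx _).
by rewrite setU11.
Qed.

Lemma point S T A : r_maximal r S T -> #|A| <= r -> #|~: A| <= r ->
  (A \in S) + (~: A \in T) = 1.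
Proof.
move=> mx hA hCA; have mx' := mx; case: mx' => [[_ _ hX] _].
have [hAS | nAS] := boolP (A \in S).
  have [hCT | //] := boolP (~: A \in T).
  by have := hX _ _ hAS hCT; rewrite setICr eqxx.
have [B hB e] := disj mx hA nAS.
have sB : B \subset ~: A by rewrite -disjoints_subset -setI_eq0 setIC e.
by rewrite (upT mx hB sB hCA).
Qed.

End Aux.

Theorem lemma5p1 (n r : nat) (S T : setfam n) (l : nat) :
  n <= 2 * r -> r <= n -> r_maximal r S T ->
  l <= r -> n - l <= r ->
  #|layer S (n - l)| + #|layer T (n - l)| + #|layer S l| + #|layer T l|
    = 2 * 'C(n, l).
Proof.
move=> _ hrn mx hl hnl.
set L := [set A : {set 'I_n} | #|A| == l].
have cardL : #|L| = 'C(n, l) by rewrite card_draws card_ord.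
have cnt : forall (p : pred {set 'I_n}), #|[set A in L | p A]| = \sum_(A in L) p A.
  move=> p; rewrite -sum1_card big_mkcond [RHS]big_mkcond /=.
  apply: eq_bigr => A _; rewrite !inE.
  by case: (#|A| == l); case: (p A).
have layerL : forall F : setfam n, layer F l = [set A in L | A \in F].
  move=> F; apply/setP => X; rewrite !inE; by rewrite andbC.
have layerC : forall F : setfam n, #|layer F (n - l)| = #|[set A in L | ~: A \in F]|.
  move=> F; rewrite -(card_imset _ (@setC_inj _)); apply: eq_card => A.
  rewrite [A \in layer _ _]inE; apply/andP/imsetP.
    move=> [hA hc]; exists (~: A); last by rewrite setCK.
    rewrite !inE setCK hA /= cardsCs setCK card_ord (eqP hc).
    by rewrite subKn ?eqxx // (leq_trans hl hrn).
  move=> [B]; rewrite !inE => /andP [/eqP hB hBF] ->; split=> //.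
  by rewrite cardsCs setCK card_ord hB.
rewrite !layerC !layerL !cnt -!big_split /=.
rewrite (eq_bigr (fun _ => 2)); first by rewrite sum_nat_const cardL mulnC.
move=> A; rewrite inE => /eqP hA.
have h1 : #|A| <= r by rewrite hA.
have h2 : #|~: A| <= r by rewrite cardsCs setCK card_ord hA.
have e1 := point mx h1 h2.
have e2 := point (swap_max mx) h1 h2.
move: e1 e2; case: (A \in S); case: (A \in T); case: (~: A \in S); case: (~: A \in T) => //=.
Qed.
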